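(* Let $K$ be a field, $R=K[x_1,\ldots,x_n]$, $\prec$ an admissible monomial ordering on $R$, and $\mathcal{L}$ an involutive division of the class described in the context (determined by a permutation $\rho$ of $\{1,\ldots,n\}$ and a total monomial ordering $\sqsupset$ which is either admissible or the inverse of an admissible ordering). Let $G=\{g_1,\ldots,g_k\}$ be a minimal Gröbner basis of an ideal $I\subset R$ with respect to $\prec$, and for $i=1,\ldots,n$ let $h_i=\max_{g\in G}\deg_i(\mathrm{LM}(g))$. Then the set of products $$\bar G=\{\, m g \mid g\in G,\ m \text{ a monomial such that } \deg_i(m)\le h_i-\deg_i(\mathrm{LM}(g)) \text{ for all } i=1,\ldots,n\,\}$$ is an $\mathcal{L}$-involutive basis of $I$ with respect to $\prec$.
   Context: For a monomial $u=x_1^{\alpha_1}\cdots x_n^{\alpha_n}$, $\deg_i(u)=\alpha_i$; $\mathrm{LM}(f)$ denotes the leading monomial of $f$ with respect to $\prec$. The involutive division $\mathcal{L}$ is defined as follows. Fix a permutation $\rho$ of $\{1,\ldots,n\}$ and a total ordering $\sqsupset$ on monomials that is either an admissible monomial ordering or the inverse of one. For a finite set $U$ of monomials and $u,v\in U$, set $NM(u,\{u,v\})=\emptyset$ if $u\sqsupset v$ or ($u\sqsubset v$ and $v$ divides $u$); otherwise $NM(u,\{u,v\})=\{x_{\rho(i)}\}$ where $i=\min\{j \mid \deg_{\rho(j)}(u)<\deg_{\rho(j)}(v)\}$. The set of nonmultiplicative variables of $u\in U$ is $NM_{\mathcal{L}}(u,U)=\bigcup_{v\in U\setminus\{u\}}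 NM(u,\{u,v\})$, and the remaining variables form the set $M_{\mathcal{L}}(u,U)$ of multiplicative variables. Let $\mathcal{L}(u,U)$ be the set of all monomials in the variables of $M_{\mathcal{L}}(u,U)$. For $u\in U$ and a monomial $w$, $u$ is an $\mathcal{L}$-divisor of $w$ (written $u\mid_{\mathcal{L}} w$) if $w\in u\,\mathcal{L}(u,U)$. (For example, $\sqsupset=\succ_{\mathrm{lex}}$ with $\rho$ the identity gives Janet division.) A finite set $G'\subset I$ is an $\mathcal{L}$-involutive basis of $I$ with respect to $\prec$ if for every nonzero $f\in I$ there exists $g\in G'$ with $\mathrm{LM}(g)\mid_{\mathcal{L}}\mathrm{LM}(f)$, where the involutive divisibility is taken with respect to $U=\mathrm{LM}(G')=\{\mathrm{LM}(g)\mid g\in G'\}$. *)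

(* Defs.v *)
From HB Require Import structures.
From mathcomp Require Import all_boot all_order all_algebra all_fingroup.
From mathcomp Require Import mpoly.
Set Implicit Arguments.
Unset Strict Implicit.
Unset Printing Implicit Defensive.
Import Order.TTheory GRing.Theory.
Local Open Scope ring_scope.

Section Defs.
Variable n : nat.
Notation mon := ('X_{1..n}).

Definition total_order_mon (le : rel mon) : Prop :=
  [/\ reflexive le, antisymmetric le, transitive le & total le].

Definition admissible (le : rel mon) : Prop :=
  [/\ total_order_mon le,
      (forall a b c : mon, le a b -> le (a + c)%MM (b + c)%MM) &
      (forall a : mon, le 0%MM a)].

(* Leading monomial of p w.r.t. [le]: the [le]-largest monomial of the support
   (0 for p = 0, irrelevant). *)
Definition LM (le : rel mon) (K : nzRingType) (p : {mpoly K[n]}) : mon :=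
  foldr (fun m acc => if le acc m then m else acc) 0%MM (msupp p).

Definition mdivides (u w : mon) : bool := (u <= w)%MM.

Definition is_ideal (K : nzRingType) (I : {mpoly K[n]} -> Prop) : Prop :=
  [/\ I 0,
      (forall f g, I f -> I g -> I (f + g)) &
      (forall r f, I f -> I (r * f))].

Definition groebner_basis (le : rel mon) (K : nzRingType)
    (I : {mpoly K[n]} -> Prop) (G : seq {mpoly K[n]}) : Prop :=
  (forall g, g \in G -> I g) /\
  (forall f, I f -> f != 0 ->
     exists2 g, g \in G & mdivides (LM le g) (LM le f)).

Definition minimal_groebner_basis (le : rel mon) (K : nzRingType)
    (I : {mpoly K[n]} -> Prop) (G : seq {mpoly K[n]}) : Prop :=
  [/\ groebner_basis le I G,
      (forall g, g \in G -> g != 0) &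
      (forall g g', g \in G -> g' \in G -> g != g' ->
         ~~ mdivides (LM le g') (LM le g))].

(* The involutive division L determined by rho and sq.  [sq a b] means
   a "below-or-equal" b for the ordering ⊐, i.e. b ⊐ a or b = a. *)
Definition sq_gt (sq : rel mon) (u v : mon) : Prop := sq v u /\ u != v.
Definition sq_lt (sq : rel mon) (u v : mon) : Prop := sq u v /\ u != v.

Definition NM_pair (rho : {perm 'I_n}) (sq : rel mon) (u v : mon) (j : 'I_n)
    : Prop :=
  ~ (sq_gt sq u v \/ (sq_lt sq u v /\ mdivides v u)) /\
  exists i : 'I_n,
    [/\ j = rho i, u (rho i) < v (rho i) &
        forall i' : 'I_n, i' < i -> ~~ (u (rho i') < v (rho i'))]%N.

Definition NM_L (rho : {perm 'I_n}) (sq : rel mon) (U : mon -> Prop)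
    (u : mon) (j : 'I_n) : Prop :=
  exists v, [/\ U v, v <> u & NM_pair rho sq u v j].

Definition M_L (rho : {perm 'I_n}) (sq : rel mon) (U : mon -> Prop)
    (u : mon) (j : 'I_n) : Prop := ~ NM_L rho sq U u j.

Definition L_divides (rho : {perm 'I_n}) (sq : rel mon) (U : mon -> Prop)
    (u w : mon) : Prop :=
  exists t : mon, w = (u + t)%MM /\
    forall j : 'I_n, (0 < t j)%N -> M_L rho sq U u j.

Definition finite_set (T : eqType) (A : T -> Prop) : Prop :=
  exists s : seq T, forall x, A x <-> x \in s.

Definition involutive_basis (rho : {perm 'I_n}) (sq : rel mon)
    (le : rel mon) (K : nzRingType) (I : {mpoly K[n]} -> Prop)
    (G' : {mpoly K[n]} -> Prop) : Prop :=
  [/\ finite_set G',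
      (forall g, G' g -> I g) &
      (forall f, I f -> f != 0 ->
         exists2 g, G' g &
           L_divides rho sq (fun u => exists2 g', G' g' & u = LM le g')
                     (LM le g) (LM le f))].

Definition hmax (le : rel mon) (K : nzRingType) (G : seq {mpoly K[n]})
    (i : 'I_n) : nat :=
  \max_(g <- G) (LM le g i).

Definition Gbar (le : rel mon) (K : nzRingType) (G : seq {mpoly K[n]})
    (f : {mpoly K[n]}) : Prop :=
  exists2 g, g \in G & exists m : mon,
    (forall i : 'I_n, m i <= hmax le G i - LM le g i)%N /\ f = 'X_[m] * g.

End Defs.

(* Main.v *)
Require Import Defs.
From HB Require Import structures.
From mathcomp Require Import all_boot all_order all_algebra all_fingroup.
From mathcomp Require Import mpoly.
Local Open Scope ring_scope.

Section Aux.
Variable n : nat.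
Variable le : rel 'X_{1..n}.
Hypothesis adm : admissible le.

Lemma foldr_max_spec (s : seq 'X_{1..n}) : s != [::] ->
  foldr (fun m acc => if le acc m then m else acc) 0%MM s \in s /\
  forall x, x \in s -> le x (foldr (fun m acc => if le acc m then m else acc) 0%MM s).
Proof.
case: adm => -[refl _ tr tot] _ le0.
elim: s => // x s IH _ /=.
case: s IH => [|y s] IH /=.
  rewrite le0 mem_seq1 eqxx; split=> // z; rewrite mem_seq1 => /eqP ->; exact: refl.
have [Hin Hmax] := IH isT.
set r := foldr _ _ (y :: s) in Hin Hmax *.
case: ifP => H.
  split; first by rewrite mem_head.
  move=> z; rewrite in_cons => /orP[/eqP->|/Hmax Hz]; first exact: refl.
  exact: tr Hz H.
split; first by rewrite in_cons Hin orbT.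
move=> z; rewrite in_cons => /orP[/eqP->|/Hmax //].
by case/orP: (tot r x); rewrite ?H.
Qed.

Lemma LM_spec (K : nzRingType) (p : {mpoly K[n]}) : p != 0 ->
  LM le p \in msupp p /\ forall x, x \in msupp p -> le x (LM le p).
Proof.
move=> p0; apply: foldr_max_spec.
apply/eqP => H; move/eqP: p0; apply; apply/mpolyP => m.
by rewrite mcoeff0; apply/eqP; rewrite mcoeff_eq0 H.
Qed.

Lemma LM_mulX (K : idomainType) (g : {mpoly K[n]}) (m : 'X_{1..n}) :
  g != 0 -> LM le ('X_[m] * g) = (m + LM le g)%MM.
Proof.
move=> g0.
case: (adm) => -[refl anti tr tot] add le0.
have [Hg Hgmax] := LM_spec _ _ g0.
have Hin : (m + LM le g)%MM \in msupp ('X_[m] * g).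
  by rewrite mcoeff_msupp -commr_mpolyX mcoeffMX -mcoeff_msupp.
have p0 : 'X_[m] * g != 0.
  by apply/eqP => H; move: Hin; rewrite H msupp0.
have [Hr Hrmax] := LM_spec _ _ p0.
apply: anti; apply/andP; split; last exact: Hrmax.
move: Hr; rewrite -commr_mpolyX (perm_mem (msuppMX g m)) => /mapP [y Hy ->].
have := add _ _ m (Hgmax _ Hy).
by rewrite addmC [(LM le g + m)%MM]addmC.
Qed.

End Aux.

Lemma leq_bigmax_seq' (T : eqType) (F : T -> nat) (s : seq T) x :
  x \in s -> (F x <= \max_(y <- s) F y)%N.
Proof.
elim: s => // y s IH; rewrite big_cons in_cons => /orP[/eqP->|/IH H].
  exact: leq_maxl.
exact: leq_trans H (leq_maxr _ _).
Qed.

Theorem proposition1 (K : fieldType) (n : nat) (le : rel 'X_{1..n})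
    (rho : {perm 'I_n}) (sq : rel 'X_{1..n})
    (I : {mpoly K[n]} -> Prop) (G : seq {mpoly K[n]}) :
  admissible le ->
  (admissible sq \/ admissible (fun a b => sq b a)) ->
  is_ideal I ->
  minimal_groebner_basis le I G ->
  involutive_basis rho sq le I (Gbar le G).
Proof.
move=> adm _ [I0 ID IM] [[GI Gb] Gnz _].
set hm := hmax le G.
have hA : forall g i, g \in G -> (LM le g i <= hm i)%N.
  by move=> g i Hg; rewrite /hm /hmax; apply: leq_bigmax_seq'.
have hB : forall f i, Gbar le G f -> (LM le f i <= hm i)%N.
  move=> f i [g Hg [m [Hm ->]]].
  rewrite LM_mulX //; last exact: Gnz.
  rewrite mnmDE -(subnK (hA g i Hg)) leq_add2r; exact: Hm.
split.
- pose B := (\sum_i hm i).+1.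
  exists (flatten [seq [seq 'X_[val m] * g | m <- filter (fun m : 'X_{1..n < B} =>
            [forall i, (val m) i <= hm i - LM le g i]%N) (enum {: 'X_{1..n < B}})] | g <- G]).
  move=> f; split.
  + move=> [g Hg [m [Hm ->]]].
    apply/flatten_mapP; exists g => //.
    have mB : (mdeg m < B)%N.
      rewrite ltnS mdegE; apply: leq_sum => i _.
      exact: leq_trans (Hm i) (leq_subr _ _).
    apply/mapP; exists (BMultinom mB) => //.
    by rewrite mem_filter mem_enum andbT; apply/forallP.
  + move=> /flatten_mapP [g Hg /mapP [m]].
    rewrite mem_filter => /andP [/forallP Hm _] ->.
    by exists g => //; exists (val m); split.
- by move=> f [g Hg [m [_ ->]]]; apply: IM; apply: GI.
move=> f If f0.
have [g0 Hg0 Hdiv] := Gb f If f0.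
set w := LM le f in Hdiv *.
pose u : 'X_{1..n} := [multinom minn (w i) (hm i) | i < n].
have uE : forall i, u i = minn (w i) (hm i) by move=> i; rewrite mnmE.
have g0u : (LM le g0 <= u)%MM.
  apply/mnm_lepP => i; rewrite uE leq_min (hA _ _ Hg0) andbT.
  by move/mnm_lepP: Hdiv.
pose g' := 'X_[(u - LM le g0)%MM] * g0.
have Hg' : Gbar le G g'.
  exists g0 => //; exists (u - LM le g0)%MM; split => // i.
  by rewrite mnmBE uE leq_sub2r // geq_minr.
have LMg' : LM le g' = u.
  by rewrite /g' LM_mulX ?Gnz // submK.
exists g'; first exact: Hg'. rewrite LMg'.
exists (w - u)%MM; split.
  apply/mnmP => i; rewrite mnmDE mnmBE uE subnKC //; exact: geq_minl.
move=> j; rewrite mnmBE uE subn_gt0 => Hj.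
have hw : minn (w j) (hm j) = hm j.
  by apply/minn_idPr; apply: ltnW; move: Hj; rewrite gtn_min ltnn /= => Hj.
move=> [v [[g'' Hg'' ->] _ [_ [i [Ej Hlt _]]]]].
move: Hlt; rewrite -Ej uE hw ltnNge (hB _ _ Hg'') //.
Qed.
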